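(* In the errorless symmetric relay network described in the context, the greedy policy $G$ is optimal for minimizing the average sum AoI at the destination nodes: for every horizon $T\ge1$, $G$ minimizes $\frac{1}{TK}\sum_{t=1}^T\sum_{k=1}^K h_k^{\pi}(t)$ over all policies $\pi$. Furthermore, for every time slot $t$, $G$ minimizes the instantaneous sums $\frac1K\sum_{k=1}^K h_k^{\pi}(t)$ and $\frac1K\sum_{k=1}^K g_k^{\pi}(t)$ over all policies $\pi$.
   Context: Fix integers $K\ge 2$ and $S,U$ with $1\le S<K$, $1\le U<K$, and $S=U$. There are $K$ processes indexed by $k\in\{1,\dots,K\}$ and time slots $t=1,2,\dots$. The state at time $t$ consists of relay AoI values $g_k(t)$ and destination AoI values $h_k(t)$, with $g_k(1)=h_k(1)=1$ for all $k$. A policy $\pi$ is a map assigning to the current state a pair $(\mathcal{S}^{\pi}(t),\mathcal{U}^{\pi}(t))$ of subsets of $\{1,\dots,K\}$ with $|\mathcal{S}^{\pi}(t)|=S$ and $|\mathcal{U}^{\pi}(t)|=U$. Errorless dynamics: $g_k(t+1)=1$ if $k\in\mathcal{S}(t)$, else $g_k(t+1)=g_k(t)+1$; $h_k(t+1)=g_k(t)+1$ if $k\in\mathcal{U}(t)$, else $h_k(t+1)=h_k(t)+1$. Write $g_k^\pi(t),h_k^\pi(t)$ for the sequences under $\pi$. The greedy policy $G$ chooses at each time $t$ a set $\mathcal{S}^G(t)$ of $S$ indices with the largest values $g_k(t)$ (i.e. maximizing $\sum_{k\in\mathcal{S}}g_k(t)$ over $|\mathcal{S}|=S$) and a set $\mathcal{U}^G(t)$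 of $U$ indices with the largest gaps $h_k(t)-g_k(t)$ (i.e. maximizing $\sum_{k\in\mathcal{U}}(h_k(t)-g_k(t))$ over $|\mathcal{U}|=U$). *)

(* Defs.v *)
From mathcomp Require Import all_boot all_order all_algebra.
Set Implicit Arguments. Unset Strict Implicit. Unset Printing Implicit Defensive.
Import Order.TTheory GRing.Theory Num.Theory.

(* State: relay AoI g and destination AoI h, indexed by processes 'I_K
   (process k in {1..K} is the ordinal k-1). *)
Definition state (K : nat) : Type := ('I_K -> nat) * ('I_K -> nat).

(* A (stationary) policy: map from current state to (sampled set, updated set). *)
Definition policy (K : nat) : Type := state K -> {set 'I_K} * {set 'I_K}.

Definition valid_policy (K S U : nat) (pi : policy K) : Prop :=
  forall st : state K, #|(pi st).1| = S /\ #|(pi st).2| = U.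

Definition step (K : nat) (st : state K) (a : {set 'I_K} * {set 'I_K}) : state K :=
  (fun k => if k \in a.1 then 1%N else (st.1 k).+1,
   fun k => if k \in a.2 then (st.1 k).+1 else (st.2 k).+1).

Definition init_state (K : nat) : state K := (fun _ => 1%N, fun _ => 1%N).

(* traj pi n = state at time slot t = n+1. *)
Fixpoint traj (K : nat) (pi : policy K) (n : nat) : state K :=
  match n with
  | 0 => init_state K
  | n'.+1 => let st := traj pi n' in step st (pi st)
  end.

Definition gAoI (K : nat) (pi : policy K) (t : nat) (k : 'I_K) : nat :=
  (traj pi t.-1).1 k.
Definition hAoI (K : nat) (pi : policy K) (t : nat) (k : 'I_K) : nat :=
  (traj pi t.-1).2 k.

Definition greedy (K S U : nat) (G : policy K) : Prop :=
  valid_policy S U G /\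
  forall st : state K,
    (forall A : {set 'I_K}, #|A| = S ->
        (\sum_(k in A) st.1 k <= \sum_(k in (G st).1) st.1 k)%N) /\
    (forall B : {set 'I_K}, #|B| = U ->
        (\sum_(k in B) ((st.2 k)%:Z - (st.1 k)%:Z)
         <= \sum_(k in (G st).2) ((st.2 k)%:Z - (st.1 k)%:Z))%R).

Local Open Scope ring_scope.

Definition avg_sum_h (K : nat) (pi : policy K) (T : nat) : rat :=
  (\sum_(1 <= t < T.+1) \sum_(k < K) hAoI pi t k)%N%:R / (T * K)%N%:R.

Definition inst_h (K : nat) (pi : policy K) (t : nat) : rat :=
  (\sum_(k < K) hAoI pi t k)%N%:R / K%:R.
Definition inst_g (K : nat) (pi : policy K) (t : nat) : rat :=
  (\sum_(k < K) gAoI pi t k)%N%:R / K%:R.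

(* Main.v *)
Require Import Defs.
From mathcomp Require Import all_boot all_order all_algebra.
From mathcomp Require Import zify.
Import Order.TTheory GRing.Theory Num.Theory.
Set Implicit Arguments. Unset Strict Implicit.

Lemma swap_nat (K S : nat) (f : 'I_K -> nat) (A : {set 'I_K}) :
  #|A| = S -> (forall B : {set 'I_K}, #|B| = S -> \sum_(k in B) f k <= \sum_(k in A) f k) ->
  forall j k, j \in A -> k \notin A -> f k <= f j.
Proof.
move=> hA hmax j k jA kA.
have kD : k \notin A :\ j by rewrite in_setD1 (negbTE kA) andbF.
have cB : #|k |: (A :\ j)| = S.
  rewrite cardsU1 kD; have := cardsD1 j A; rewrite jA; lia.
have := hmax _ cB.
rewrite big_setU1 //= (big_setD1 _ jA) /=. lia.
Qed.

Lemma swap_int (K S : nat) (f : 'I_K -> int) (A : {set 'I_K}) :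
  #|A| = S -> (forall B : {set 'I_K}, #|B| = S -> (\sum_(k in B) f k <= \sum_(k in A) f k)%R) ->
  forall j k, j \in A -> k \notin A -> (f k <= f j)%R.
Proof.
move=> hA hmax j k jA kA.
have kD : k \notin A :\ j by rewrite in_setD1 (negbTE kA) andbF.
have cB : #|k |: (A :\ j)| = S.
  rewrite cardsU1 kD; have := cardsD1 j A; rewrite jA; lia.
have := hmax _ cB.
rewrite big_setU1 //= (big_setD1 _ jA) /=. by rewrite lerD2r.
Qed.

Lemma g_le_h K (pi : policy K) n k : (traj pi n).1 k <= (traj pi n).2 k.
Proof.
elim: n k => [|n IH] k //=.
have := IH k; rewrite /step /=; case: ifP; case: ifP => //; lia.
Qed.

Lemma g_bound K (pi : policy K) n k : (traj pi n).1 k <= n.+1.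
Proof.
elim: n k => [|n IH] k //=.
have := IH k; rewrite /step /=; case: ifP => //; lia.
Qed.

Lemma h_ge K (pi : policy K) n k : ((traj pi n).1 k).+1 <= (traj pi n.+1).2 k.
Proof.
rewrite /= /step /=; case: ifP => // _; have := g_le_h pi n k; lia.
Qed.

Lemma sum_lt_min x B : \sum_(m < B) (m < x : nat) = minn x B.
Proof.
elim: B => [|B IH]; first by rewrite big_ord0; lia.
rewrite big_ord_recr /= IH; case: ltnP => h /=; lia.
Qed.

Lemma sum_count K (x : 'I_K -> nat) B : (forall k, x k <= B) ->
  \sum_k x k = \sum_(m < B) #|[set k | m < x k]|.
Proof.
move=> hB.
transitivity (\sum_k \sum_(m < B) (m < x k : nat)).
  apply: eq_bigr => k _; rewrite sum_lt_min; have := hB k; lia.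
rewrite exchange_big; apply: eq_bigr => m _.
rewrite -sum1_card [RHS]big_mkcond /=; apply: eq_bigr => k _; rewrite inE; by case: ifP.
Qed.

Lemma greedy_P_sub K S U (G : policy K) (hG : greedy S U G) (hSU : S = U) (st : state K) :
  (forall k, st.1 k <= st.2 k) -> #|[set k | st.1 k != st.2 k]| <= U ->
  forall k, st.1 k != st.2 k -> k \in (G st).2.
Proof.
move=> hle hP k hk; apply/negPn/negP => kU.
have [_ hcard] := hG.1 st.
have [_ hmax] := hG.2 st.
set P := [set k | st.1 k != st.2 k].
have : ~~ ((G st).2 \subset P).
  apply/negP => sub.
  have : k |: (G st).2 \subset P by rewrite subUset sub1set inE hk sub.
  move/subset_leq_card; rewrite cardsU1 hcard kU /= -/P; move=> h2; have := leq_trans h2 hP; lia.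
case/subsetPn => j jU; rewrite inE negbK => /eqP hj.
have := swap_int hcard hmax jU kU; rewrite hj subrr.
have := hle k; move: hk; lia.
Qed.

Lemma greedy_inv K S U (G : policy K) (hG : greedy S U G) (hSU : S = U) n :
  #|[set k | (traj G n).1 k != (traj G n).2 k]| <= U.
Proof.
elim: n => [|n IH].
  rewrite (_ : [set k | _] = set0) ?cards0 //; apply/setP => k; by rewrite !inE.
have hsub := greedy_P_sub hG hSU (g_le_h G n) IH.
have [hcS _] := hG.1 (traj G n).
rewrite -hSU -hcS; apply: subset_leq_card; apply/subsetP => k; rewrite inE /= /step /=.
case: ifP => // kA; case: ifP => kU; first by rewrite eqxx.
rewrite eqSS => hne; have := hsub k hne; by rewrite kU.
Qed.

Lemma greedy_h K S U (G : policy K) (hG : greedy S U G) (hSU : S = U) n k :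
  (traj G n.+1).2 k = ((traj G n).1 k).+1.
Proof.
have hsub := greedy_P_sub hG hSU (g_le_h G n) (greedy_inv hG hSU n).
rewrite /= /step /=; case: ifP => // kU.
case: (eqVneq ((traj G n).1 k) ((traj G n).2 k)) => [->|hne] //.
have := hsub k hne; by rewrite kU.
Qed.

Lemma cnt_step K (st : state K) a m :
  [set k | m.+1 < (step st a).1 k] = [set k | m < st.1 k] :\: a.1.
Proof. apply/setP => k; rewrite !inE /step /=; by case: ifP. Qed.

Lemma cnt0 K (st : state K) a : [set k | 0 < (step st a).1 k] = setT.
Proof. apply/setP => k; rewrite !inE /step /=; by case: ifP. Qed.

Lemma cardsD_ge K (D A : {set 'I_K}) : #|D| - #|A| <= #|D :\: A|.
Proof. rewrite cardsD; have := subset_leq_card (subsetIr D A); lia. Qed.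

Lemma cnt_G K S (st : state K) (A : {set 'I_K}) m :
  #|A| = S -> (forall B : {set 'I_K}, #|B| = S -> \sum_(k in B) st.1 k <= \sum_(k in A) st.1 k) ->
  #|[set k | m < st.1 k] :\: A| <= #|[set k | m < st.1 k]| - S.
Proof.
move=> hA hmax.
case: (boolP (A \subset [set k | m < st.1 k])) => sub.
  rewrite cardsD (setIidPr sub) hA //.
case/subsetPn: sub => j jA; rewrite inE -leqNgt => hj.
rewrite (_ : _ :\: A = set0) ?cards0 //; apply/setP => k; rewrite !inE.
case: (boolP (k \in A)) => kA /=; first by [].
apply/negbTE; rewrite -leqNgt; exact: leq_trans (swap_nat hA hmax jA kA) hj.
Qed.

Lemma cnt_cmp K S U (G : policy K) (hG : greedy S U G) (pi : policy K) (hpi : valid_policy S U pi) n m :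
  #|[set k | m < (traj G n).1 k]| <= #|[set k | m < (traj pi n).1 k]|.
Proof.
elim: n m => [|n IH] m //.
case: m => [|m]; first by rewrite /= !cnt0.
rewrite /= !cnt_step.
have [hcS _] := hG.1 (traj G n).
have [hmax _] := hG.2 (traj G n).
have [hpS _] := hpi (traj pi n).
apply: leq_trans (cnt_G m hcS hmax) _.
apply: leq_trans (cardsD_ge _ _); rewrite hpS.
exact: leq_sub2r _ (IH m).
Qed.

Lemma sum_g K S U (G : policy K) (hG : greedy S U G) (pi : policy K) (hpi : valid_policy S U pi) n :
  \sum_k (traj G n).1 k <= \sum_k (traj pi n).1 k.
Proof.
rewrite (sum_count (B := n.+1) (g_bound G n)) (sum_count (B := n.+1) (g_bound pi n)).
apply: leq_sum => m _. exact: (cnt_cmp hG hpi n m).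
Qed.

Lemma sum_h K S U (G : policy K) (hG : greedy S U G) (hSU : S = U) (pi : policy K) (hpi : valid_policy S U pi) n :
  \sum_k (traj G n).2 k <= \sum_k (traj pi n).2 k.
Proof.
case: n => [|n] //.
under eq_bigr => k _ do rewrite (greedy_h hG hSU n k).
have e (f : 'I_K -> nat) : \sum_k (f k).+1 = \sum_k f k + \sum_(k < K) 1.
  transitivity (\sum_k (f k + 1)); first by apply: eq_bigr => k _; rewrite addn1.
  by rewrite big_split.
apply: (@leq_trans (\sum_k ((traj pi n).1 k).+1)).
  rewrite (e (traj G n).1) (e (traj pi n).1) leq_add2r; exact: (sum_g hG hpi n).
apply: leq_sum => k _; exact: h_ge.
Qed.

Local Open Scope ring_scope.

Theorem theorem2 (K S U : nat) (hK : (2 <= K)%N) (hS1 : (1 <= S)%N) (hSK : (S < K)%N)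
    (hU1 : (1 <= U)%N) (hUK : (U < K)%N) (hSU : S = U)
    (G : policy K) (hG : greedy S U G) :
  forall pi : policy K, valid_policy S U pi ->
    (forall T : nat, (1 <= T)%N -> avg_sum_h G T <= avg_sum_h pi T) /\
    (forall t : nat, (1 <= t)%N ->
        inst_h G t <= inst_h pi t /\ inst_g G t <= inst_g pi t).
Proof.
move=> pi hpi; split.
  move=> T _; rewrite /avg_sum_h ler_wpM2r ?invr_ge0 ?ler0n // ler_nat.
  apply: leq_sum => t _; rewrite /hAoI; exact: (sum_h hG hSU hpi).
move=> t _; split.
  rewrite /inst_h ler_wpM2r ?invr_ge0 ?ler0n // ler_nat /hAoI; exact: (sum_h hG hSU hpi).
rewrite /inst_g ler_wpM2r ?invr_ge0 ?ler0n // ler_nat /gAoI; exact: (sum_g hG hpi).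
Qed.
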